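(* For $n\in\mathbb N$ let $\mu_n=\{p/n:p\in\mathbb Z,\ |p/n|\le n\}$, and let $\Lambda_{\mathbb Q}=\{\mu_{m!}:m\in\mathbb N\}$. Let $I$ be a fine ideal of $\mathfrak F(\mathcal P_{fin}(\mathbb Q),\mathbb R)$ containing $I_{0,\Lambda_{\mathbb Q}}$ and let $P$ be the probability of the NAP-space produced by $(\mathbb Q,1,I)$. Then for all rationals $a<b$, $$P([a,b)_{\mathbb Q})=(b-a)\,P([0,1)_{\mathbb Q}),$$ equivalently $\mathfrak n([a,b)_{\mathbb Q})=(b-a)\,\mathfrak n([0,1)_{\mathbb Q})$; consequently, for rationals with $[a_0,b_0)_{\mathbb Q}\subseteq[a_1,b_1)_{\mathbb Q}$, $a_0<b_0$, $a_1<b_1$, one has $P([a_0,b_0)_{\mathbb Q}\mid[a_1,b_1)_{\mathbb Q})=\dfrac{b_0-a_0}{b_1-a_1}$.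
   Context: $[a,b)_{\mathbb Q}=\{x\in\mathbb Q:a\le x<b\}$. $\mathcal P_{fin}(\Omega)$ is the set of finite subsets of $\Omega$ and $\mathfrak F=\mathfrak F(\mathcal P_{fin}(\Omega),\mathbb R)$ the real algebra of functions $\mathcal P_{fin}(\Omega)\to\mathbb R$ with pointwise operations. For $\omega\in\Omega$, $\chi_\lambda(\omega)=1$ if $\omega\in\lambda$, else $0$. An ideal $I$ of $\mathfrak F$ is fine if it is maximal and $\lambda\mapsto 1-\chi_\lambda(\omega)$ lies in $I$ for every $\omega\in\Omega$. For $\Lambda\subseteq\mathcal P_{fin}(\Omega)$, $I_{0,\Lambda}=\{\varphi\in\mathfrak F:\varphi(\lambda)=0\text{ for all }\lambda\in\Lambda\}$. The NAP-space produced by $(\Omega,w,I)$ ($w:\Omega\to\mathbb R^+$, $I$ fine) has range field $\mathfrak F/I$, $J$ the canonical projection $\varphi\mapsto\varphi+I$, and $P(A)=J\big(\lambda\mapsto\sum_{\omega\in A\cap\lambda}w(\omega)\big)/J\big(\lambda\mapsto\sum_{\omega\in\lambda}w(\omega)\big)$; conditional probability is $P(A\mid B)=P(A\cap B)/P(B)$. For constant weight $w\equiv1$ (a fair space), the numerosity of $A$ is $\mathfrak n(A)=P(A)/P(\{\omega\})$ for any $\omega\in\Omega$, equivalently $\mathfrak n(A)=J(\lambda\mapsto|A\cap\lambda|)$. *)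

(* Defs.v *)
From Stdlib Require Import Reals.
From mathcomp Require Import all_boot all_order all_algebra.
Set Implicit Arguments. Unset Strict Implicit. Unset Printing Implicit Defensive.

Definition R_of_int (z : int) : R :=
  match z with Posz n => INR n | Negz n => Ropp (INR (S n)) end.
Definition R_of_rat (q : rat) : R := Rdiv (R_of_int (numq q)) (R_of_int (denq q)).

(* ---------- P_fin(Q): finite subsets of Q, canonically represented as
   strictly increasing sequences (so equal sets = equal elements) ---------- *)
Definition Pfin : Type := {s : seq rat | sorted (fun x y : rat => (x < y)%R) s}.
Definition memPfin (l : Pfin) (q : rat) : bool := q \in sval l.

Definition Ffun : Type := Pfin -> R.
Definition fconst (c : R) : Ffun := fun _ => c.
Definition fadd (f g : Ffun) : Ffun := fun l => Rplus (f l) (g l).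
Definition fopp (f : Ffun) : Ffun := fun l => Ropp (f l).
Definition fsub (f g : Ffun) : Ffun := fun l => Rminus (f l) (g l).
Definition fmul (f g : Ffun) : Ffun := fun l => Rmult (f l) (g l).
(* pointwise inverse (Stdlib: / 0 = 0, lemma Rinv_0) *)
Definition finv (f : Ffun) : Ffun := fun l => Rinv (f l).

Definition is_ideal (I : Ffun -> Prop) : Prop :=
  I (fconst R0) /\
  (forall f g, I f -> I g -> I (fadd f g)) /\
  (forall f g, I g -> I (fmul f g)).

Definition is_maximal_ideal (I : Ffun -> Prop) : Prop :=
  is_ideal I /\ ~ I (fconst R1) /\
  (forall J : Ffun -> Prop, is_ideal J -> (forall f, I f -> J f) ->
     (forall f, J f -> I f) \/ J (fconst R1)).

Definition chi (w : rat) : Ffun := fun l => if memPfin l w then R1 else R0.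

Definition fine_ideal (I : Ffun -> Prop) : Prop :=
  is_maximal_ideal I /\ (forall w : rat, I (fsub (fconst R1) (chi w))).

Definition I0 (Lam : Pfin -> Prop) (f : Ffun) : Prop := forall l, Lam l -> f l = R0.

Definition in_mu (n : nat) (q : rat) : Prop :=
  exists p : int, q = (p%:~R / n%:R)%R /\ (`|q| <= n%:R)%R.
Definition LambdaQ (l : Pfin) : Prop :=
  exists m : nat, forall q : rat, memPfin l q <-> in_mu (m `!) q.

(* ---------- the quotient field F/I, as the setoid F modulo I:
   J f = J g  in F/I   iff   f - g in I.  Field operations are computed on
   representatives; the inverse of a nonzero class J f is J (finv f). ---------- *)
Definition Jeq (I : Ffun -> Prop) (f g : Ffun) : Prop := I (fsub f g).
Definition qdiv (f g : Ffun) : Ffun := fmul f (finv g).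

Definition wsum (w : rat -> R) (A : rat -> bool) (l : Pfin) : R :=
  foldr Rplus R0 (map w (filter A (sval l))).

(* P(A) = J(l |-> sum_{A cap l} w) / J(l |-> sum_l w), a representative in F *)
Definition NAP_P (w : rat -> R) (A : rat -> bool) : Ffun :=
  qdiv (wsum w A) (wsum w (fun _ => true)).

Definition NAP_Pcond (w : rat -> R) (A B : rat -> bool) : Ffun :=
  qdiv (NAP_P w (fun x => A x && B x)) (NAP_P w B).

Definition w1 : rat -> R := fun _ => R1.

Definition numerosity (A : rat -> bool) : Ffun :=
  fun l => INR (size (filter A (sval l))).

Definition ivQ (a b : rat) : rat -> bool := fun x => ((a <= x) && (x < b))%R.

(* Main.v *)
Require Import Defs.
From Stdlib Require Import Reals.
From mathcomp Require Import all_boot all_order all_algebra.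
From mathcomp Require Import Rstruct zify.
From Stdlib Require Import FunctionalExtensionality.

Section Helpers.
Import Order.TTheory GRing.Theory Num.Theory.
Local Open Scope ring_scope.

Lemma divN_le (N : nat) (p q : int) : (0 < N)%N ->
  ((p%:~R / N%:R : rat) <= q%:~R / N%:R) = (p <= q).
Proof.
move=> N0; rewrite ler_pM2r ?ler_int // invr_gt0 ltr0n //.
Qed.

Lemma divN_lt (N : nat) (p q : int) : (0 < N)%N ->
  ((p%:~R / N%:R : rat) < q%:~R / N%:R) = (p < q).
Proof.
move=> N0; rewrite ltr_pM2r ?ltr_int // invr_gt0 ltr0n //.
Qed.

Lemma N_as_div (N : nat) : (0 < N)%N -> (N%:R : rat) = ((N * N)%N%:Z)%:~R / N%:R.
Proof.
move=> N0; have -> : (((N*N)%N%:Z)%:~R : rat) = (N*N)%:R by [].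
rewrite natrM mulfK //.
by rewrite pnatr_eq0 -lt0n.
Qed.

Lemma count_mu (N : nat) (s : seq rat) (A B : int) : (0 < N)%N -> uniq s ->
  (forall q, q \in s <-> in_mu N q) -> A <= B ->
  - ((N * N)%N%:Z) <= A -> B <= (N * N)%N%:Z ->
  size (filter (ivQ (A%:~R / N%:R) (B%:~R / N%:R)) s) = `|B - A|%N.
Proof.
move=> N0 us Hs AB HA HB.
set t := map (fun i : nat => (A + i%:Z)%:~R / (N%:R : rat)) (iota 0 `|B - A|).
have -> : `|B - A|%N = size t by rewrite size_map size_iota.
apply: perm_size; apply: uniq_perm; first exact: filter_uniq.
  rewrite map_inj_uniq ?iota_uniq // => i j /= Hij.
  have : (A + i%:Z)%:~R = ((A + j%:Z)%:~R : rat).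
    by apply: (mulIf _ Hij); rewrite invr_eq0 pnatr_eq0 -lt0n.
  move/eqP; rewrite eqr_int => /eqP; lia.
move=> x; rewrite mem_filter /ivQ; apply/idP/idP.
  case/andP=> /andP [Hax Hxb] /Hs [p [Hx _]]; rewrite Hx in Hax Hxb.
  have {}Hax : A <= p by rewrite -(divN_le N A p N0).
  have {}Hxb : p < B by rewrite -(divN_lt N p B N0).
  apply/mapP; exists `|p - A|%N; first by rewrite mem_iota; apply/andP; split; lia.
  by rewrite Hx; congr (_%:~R / _); lia.
case/mapP=> i; rewrite mem_iota => /andP [_ Hi] ->.
have H1 : (A%:~R / N%:R : rat) <= (A + i%:Z)%:~R / N%:R by rewrite (divN_le N A (A + i%:Z) N0); lia.
have H2 : ((A + i%:Z)%:~R / N%:R : rat) < B%:~R / N%:R by rewrite (divN_lt N (A + i%:Z) B N0); lia.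
rewrite H1 H2 /=.
apply/Hs; exists (A + i%:Z); split => //.
rewrite ler_norml; apply/andP; split.
  rewrite [X in - X <= _]N_as_div // -mulNr -intrN (divN_le N _ _ N0); lia.
rewrite [X in _ <= X]N_as_div // (divN_le N _ _ N0); lia.
Qed.

Lemma R_of_intE (z : int) : R_of_int z = (z%:~R : R).
Proof.
case: z => n; rewrite /R_of_int INRE //.
Qed.

Lemma R_of_ratE (q : rat) : R_of_rat q = ratr q.
Proof. by rewrite /R_of_rat RdivE !R_of_intE. Qed.

Lemma key (a b : rat) : a < b -> exists M, forall m (s : seq rat), (M <= m)%N ->
  uniq s -> (forall q, q \in s <-> in_mu m`! q) ->
  INR (size (filter (ivQ a b) s)) = Rmult (R_of_rat (b - a)) (INR m`!).
Proof.
move=> ab.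
exists (`|denq a| + `|denq b| + `|numq a| + `|numq b|)%N => m s Hm us Hs.
set N := m`!.
have N0 : (0 < N)%N by exact: fact_gt0.
have mN : (m <= N)%N by exact: fact_geq.
have rep : forall c : rat, (`|denq c| <= m)%N -> (`|numq c| <= m)%N ->
   exists C : int, c = C%:~R / N%:R /\ - ((N * N)%N%:Z) <= C /\ C <= (N * N)%N%:Z.
  move=> c Hd Hn.
  have d0 : (0 < `|denq c|)%N by rewrite absz_gt0 denq_neq0.
  have dN : (`|denq c| %| N)%N by apply: dvdn_fact; rewrite d0 Hd.
  set k := (N %/ `|denq c|)%N.
  have Nk : N = (k * `|denq c|)%N by rewrite divnK.
  have kN : (k <= N)%N by exact: leq_div.
  exists (numq c * k%:Z); split; last first.
    have : (`|numq c| * k <= N * N)%N by apply: leq_mul => //; apply: leq_trans Hn mN.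
    move=> H; split; nia.
  rewrite -{1}(divq_num_den c).
  have dc : denq c = `|denq c|%N%:Z by rewrite gez0_abs // ltW // denq_gt0.
  rewrite [in LHS]dc Nk natrM intrM.
  have -> : ((`|denq c|%N%:Z)%:~R : rat) = `|denq c|%N%:R by [].
  have -> : ((k%:Z)%:~R : rat) = k%:R by [].
  have kpos : (0 < k)%N.
    rewrite lt0n; apply/eqP => k0; rewrite k0 mul0n in Nk; by rewrite Nk in N0.
  have k0 : (k%:R : rat) != 0 by rewrite pnatr_eq0 -lt0n.
  by rewrite [k%:R * _]mulrC -mulf_div divff // mulr1.
have [A [HaA [HA1 HA2]]] := rep a ltac:(lia) ltac:(lia).
have [B [HbB [HB1 HB2]]] := rep b ltac:(lia) ltac:(lia).
have AB : A <= B.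
  apply: ltW; rewrite -(divN_lt N A B N0) -HaA -HbB //.
rewrite HaA HbB (@count_mu N s A B N0 us Hs AB HA1 HB2).
rewrite R_of_ratE RmultE !INRE -HaA -HbB.
have -> : b - a = (B - A)%:~R / N%:R by rewrite HaA HbB intrB mulrBl.
rewrite fmorph_div rmorph_int rmorph_nat mulfVK; last by rewrite pnatr_eq0 -lt0n.
have -> : (`|B - A|%N%:R : R) = ((`|B - A|%N%:Z)%:~R) by [].
congr (_%:~R); lia.
Qed.

Lemma fact_mono m M : (m <= M)%N -> (m`! <= M`!)%N.
Proof.
elim: M => [|M IH]; first by rewrite leqn0 => /eqP ->.
rewrite leq_eqVlt => /orP [/eqP -> //|]; rewrite ltnS => /IH H.
apply: leq_trans H _; rewrite factS leq_pmull //.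
Qed.

Lemma both a b c d : a < b -> c < d -> exists M, forall m (s : seq rat), (M <= m)%N ->
  uniq s -> (forall q, q \in s <-> in_mu m`! q) ->
  INR (size (filter (ivQ a b) s)) = Rmult (R_of_rat (b - a)) (INR m`!) /\
  INR (size (filter (ivQ c d) s)) = Rmult (R_of_rat (d - c)) (INR m`!).
Proof.
move=> /key [M1 H1] /key [M2 H2]; exists (maxn M1 M2) => m s Hm us Hs; split.
  by apply: H1 => //; apply: leq_trans Hm; rewrite leq_maxl.
by apply: H2 => //; apply: leq_trans Hm; rewrite leq_maxr.
Qed.

Lemma zero_in (N : nat) : in_mu N 0.
Proof. by exists 0; rewrite mul0r normr0 ler0n. Qed.

Lemma w_notin (M m : nat) : (m < M)%N -> ~ in_mu m`! ((M`!).+1%:R).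
Proof.
move=> mM [p [_ H]]; move: H; rewrite ger0_norm ?ler0n // ler_nat.
have := @fact_mono m M (ltnW mM); lia.
Qed.
End Helpers.

Lemma wsum1 A l : wsum w1 A l = INR (size (filter A (sval l))).
Proof.
rewrite /wsum; elim: (filter A (sval l)) => // x s IH.
rewrite [size _]/= S_INR -IH /w1 /=; apply: Rplus_comm.
Qed.

Lemma tail_in_I (I : Ffun -> Prop) : fine_ideal I -> (forall f, I0 LambdaQ f -> I f) ->
  forall (h : Ffun) (M : nat), (forall m l, (M <= m)%N ->
     (forall q, memPfin l q <-> in_mu m`! q) -> h l = R0) -> I h.
Proof.
move=> [[[_ [Hadd Hmul]] _] Hfine] Hsub h M Hh.
set w : rat := ((M`!).+1%:R)%R.
have -> : h = fadd (fmul h (chi w)) (fmul h (fsub (fconst R1) (chi w))).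
  apply: functional_extensionality => l.
  rewrite /fadd /fmul /fsub /fconst; ring.
apply: Hadd; last exact: Hmul.
apply: Hsub => l [m Hl]; rewrite /fmul.
case: (ltnP m M) => Hm.
  have -> : chi w l = R0.
    rewrite /chi; case E: (memPfin l w) => //.
    exfalso; have := proj1 (Hl w) E; exact: (@w_notin M m Hm).
  by rewrite Rmult_0_r.
by rewrite (Hh m l Hm Hl) Rmult_0_l.
Qed.

Section H2.
Import Order.TTheory GRing.Theory Num.Theory.
Local Open Scope ring_scope.
Lemma R_of_rat10 : R_of_rat (1 - 0) = R1.
Proof. by rewrite R_of_ratE subr0 rmorph1. Qed.
Lemma R_of_rat_div x y : R_of_rat (x / y) = Rmult (R_of_rat x) (Rinv (R_of_rat y)).
Proof. by rewrite !R_of_ratE fmorph_div. Qed.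
Lemma R_of_rat_neq0 (x y : rat) : x < y -> R_of_rat (y - x) <> R0.
Proof.
move=> xy; rewrite R_of_ratE => /eqP; rewrite fmorph_eq0 subr_eq0.
by move=> /eqP E; move: xy; rewrite E ltxx.
Qed.
Lemma uniq_l (l : Pfin) : uniq (sval l).
Proof. exact: lt_sorted_uniq (proj2_sig l). Qed.
Lemma size_pos (l : Pfin) m : (forall q, memPfin l q <-> in_mu m`! q) ->
  INR (size (filter (fun _ => true) (sval l))) <> R0.
Proof.
move=> Hl; apply: not_0_INR; rewrite filter_predT.
have := proj2 (Hl 0) (zero_in _); rewrite /memPfin.
by case: (sval l).
Qed.
Lemma fact_neq0 m : INR m`! <> R0.
Proof. apply: not_0_INR; apply/eqP; rewrite -lt0n fact_gt0 //. Qed.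
End H2.

Theorem mainTheorem15 :
  forall I : Ffun -> Prop,
    fine_ideal I ->
    (forall f, I0 LambdaQ f -> I f) ->
    (forall a b : rat, (a < b)%R ->
       Jeq I (NAP_P w1 (ivQ a b))
             (fmul (fconst (R_of_rat (b - a)%R)) (NAP_P w1 (ivQ 0%R 1%R))))
    /\
    (forall a b : rat, (a < b)%R ->
       Jeq I (numerosity (ivQ a b))
             (fmul (fconst (R_of_rat (b - a)%R)) (numerosity (ivQ 0%R 1%R))))
    /\
    (forall a0 b0 a1 b1 : rat, (a0 < b0)%R -> (a1 < b1)%R ->
       (forall x : rat, ivQ a0 b0 x -> ivQ a1 b1 x) ->
       Jeq I (NAP_Pcond w1 (ivQ a0 b0) (ivQ a1 b1))
             (fconst (R_of_rat ((b0 - a0) / (b1 - a1))%R))).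
Proof.
move=> I HI Hsub.
have h01 : ((0:rat) < 1)%R by [].
split; [|split].
- move=> a b ab; have [M HM] := @both a b 0%R 1%R ab h01; rewrite /Jeq.
  apply: (@tail_in_I I HI Hsub _ M) => m l Hm Hl.
  have [E1 E2] := HM m (sval l) Hm (uniq_l l) Hl.
  rewrite /fsub /NAP_P /qdiv /fmul /finv /fconst !wsum1 E1 E2 R_of_rat10; ring.
- move=> a b ab; have [M HM] := @both a b 0%R 1%R ab h01; rewrite /Jeq.
  apply: (@tail_in_I I HI Hsub _ M) => m l Hm Hl.
  have [E1 E2] := HM m (sval l) Hm (uniq_l l) Hl.
  rewrite /fsub /numerosity /fmul /fconst E1 E2 R_of_rat10; ring.
- move=> a0 b0 a1 b1 h0 h1 sub; have [M HM] := @both a0 b0 a1 b1 h0 h1; rewrite /Jeq.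
  apply: (@tail_in_I I HI Hsub _ M) => m l Hm Hl.
  have [E1 E2] := HM m (sval l) Hm (uniq_l l) Hl.
  have Ef : filter (fun x => ivQ a0 b0 x && ivQ a1 b1 x) (sval l) = filter (ivQ a0 b0) (sval l).
    by apply: eq_filter => x; case H: (ivQ a0 b0 x) => //=; rewrite sub.
  have S0 := @size_pos l m Hl.
  have N0 := fact_neq0 m.
  have r0 := @R_of_rat_neq0 a1 b1 h1.
  unfold Defs.fsub, NAP_Pcond, NAP_P, qdiv, Defs.fmul, Defs.finv, Defs.fconst; rewrite !wsum1 Ef E1 E2 R_of_rat_div.
  field; repeat split; assumption.
Qed.
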